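(* Let $E$ be a real vector space, $M$ a linear subspace of $E$, $S$ a sublinear functional on $E$, $P(x)=-S(-x)$ for every $x\in E$, $T(x)=\inf_{y\in E}\{S(x+y)-P(y)\}$ for $x\in E$, and $f_0$ a linear functional on $M$. Then the conditions ''$P(x)\le S(x)$ for every $x\in E$, and $P(x)\le f_0(x)\le S(x)$ for every $x\in M$'' hold if and only if $f_0(x)\le T(x)$ for every $x\in M$.
   Context: A functional $S:E\to\mathbb{R}$ is sublinear if $S(x+y)\le S(x)+S(y)$ for all $x,y\in E$ and $S(\alpha x)=\alpha S(x)$ for all $x\in E$, $\alpha>0$. *)

(* Defs.v *)
From HB Require Import structures.
From mathcomp Require Import all_boot all_order all_algebra.
From mathcomp Require Import all_classical all_reals ereal.
Set Implicit Arguments. Unset Strict Implicit. Unset Printing Implicit Defensive.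
Import Order.TTheory GRing.Theory Num.Theory.
Local Open Scope ring_scope.
Local Open Scope classical_set_scope.

Definition sublinear (R : realType) (E : lmodType R) (S : E -> R) : Prop :=
  (forall x y : E, S (x + y) <= S x + S y) /\
  (forall (x : E) (a : R), 0 < a -> S (a *: x) = a * S x).

Definition is_subspace (R : realType) (E : lmodType R) (M : set E) : Prop :=
  M 0 /\ (forall (a : R) (x y : E), M x -> M y -> M (a *: x + y)).

(* f0 is a linear functional on M (values off M are irrelevant). *)
Definition linear_on (R : realType) (E : lmodType R) (M : set E) (f0 : E -> R) : Prop :=
  forall (a : R) (x y : E), M x -> M y -> f0 (a *: x + y) = a * f0 x + f0 y.

Definition Pdual_fun (R : realType) (E : lmodType R) (S : E -> R) (x : E) : R := - S (- x).

Definition Tinf_fun (R : realType) (E : lmodType R) (S : E -> R) (x : E) : \bar R :=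
  ereal_inf [set ((S (x + y) - Pdual_fun S y)%R)%:E | y in [set: E]].

(* Main.v *)
Require Import Defs.
From HB Require Import structures.
From mathcomp Require Import all_boot all_order all_algebra.
From mathcomp Require Import all_classical all_reals ereal.
From mathcomp Require Import lra.
Import Order.TTheory GRing.Theory Num.Theory.
Local Open Scope ring_scope.
Local Open Scope classical_set_scope.

Theorem corollary4p1 (R : realType) (E : lmodType R) (M : set E) (S : E -> R)
  (f0 : E -> R) (hM : is_subspace M) (hS : sublinear S) (hf0 : linear_on M f0) :
  ((forall x : E, Pdual_fun S x <= S x) /\
   (forall x : E, M x -> Pdual_fun S x <= f0 x /\ f0 x <= S x))
  <-> (forall x : E, M x -> ((f0 x)%:E <= Tinf_fun S x)%E).
Proof.
case: hS => Sadd Shom; case: hM => M0 Mlin.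
have S0 : S 0 = 0.
  have h2 : (0:R) < 2 by rewrite ltr0n.
  have := Shom 0 2 h2; rewrite scaler0 => h.
  have : S 0 * 2 - S 0 = 0 by rewrite mulrC -h subrr.
  by rewrite -{2}(mulr1 (S 0)) -mulrBr => ?; nra.
have f00 : f0 0 = 0.
  have := hf0 1 0 0 M0 M0; rewrite scaler0 addr0 mul1r => ?; lra.
have key : forall x, ((f0 x)%:E <= Tinf_fun S x)%E <->
    (forall y, f0 x <= S (x + y) - Pdual_fun S y).
  move=> x; split.
    move=> h y; rewrite -lee_fin; apply: (le_trans h).
    by apply: ereal_inf_lbound; exists y.
  move=> h; apply: le_ereal_inf_tmp => _ [y _ <-]; rewrite lee_fin; exact: h.
split.
  move=> [_ H] x Mx; apply/key => y; rewrite /Pdual_fun opprK.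
  have [_ h] := H x Mx; apply: (le_trans h).
  by have := Sadd (x + y) (- y); rewrite addrK.
move=> H; split.
  move=> y; have /key := H 0 M0 => /(_ (- y)).
  rewrite f00 add0r /Pdual_fun !opprK => ?; lra.
move=> x Mx.
have fx : f0 x <= S x.
  by have /key := H x Mx => /(_ 0); rewrite addr0 /Pdual_fun oppr0 S0 oppr0 subr0.
have Mmx : M (- x) by have := Mlin (-1) x 0 Mx M0; rewrite addr0 scaleN1r.
have fmx : f0 (- x) = - f0 x.
  by have := hf0 (-1) x 0 Mx M0; rewrite addr0 scaleN1r f00 addr0 mulN1r.
split => //.
have /key := H _ Mmx => /(_ 0); rewrite addr0 /Pdual_fun oppr0 S0 oppr0 subr0 fmx.
by rewrite lerNl.
Qed.
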